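(* Let $X$ be a Wright--Fisher diffusion on $\Delta_{d-1}=\{x\in[0,1]^d:\sum_i x_i=1\}$ with diffusion coefficient $V_{ij}(x)=x_i(\delta_{ij}-x_j)$ and drift $\mu(x;\varphi)=c(x)+Z(x)\varphi$, where $\varphi\in\mathbb R^r$, $Z(x)$ is a $d\times r$ matrix not depending on $\varphi$ with $a_i(x;\varphi)=\sum_{k=1}^r Z_{ik}(x)\varphi_k$, and $\sum_{i=1}^d c_i(x)=\sum_{i=1}^d Z_{ik}(x)=0$ for all $k$. Call the estimation of $\varphi$ robust to $c$ if the quantity $$\varphi^\top Z^*(x)^\top V^*(x)^{-1}c^*(x)$$ does not depend on $\varphi$, where $Z^*,c^*$ denote the first $d-1$ rows of $Z,c$ and $V^*(x)$ is the upper-left $(d-1)\times(d-1)$ block of $V(x)$ (so $[V^*(x)^{-1}]_{ij}=x_d^{-1}+x_i^{-1}\delta_{ij}$). Then the estimation is robust to $c$ if and only if $$\sum_{i=1}^d\frac{1}{x_i}\frac{\partial a_i}{\partial\varphi_k}(x)\,c_i(x)=0\qquad\text{for each }k=1,\dots,r.$$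
   Context: The estimator in question is $\hat\varphi=\big[\int_0^T Z(X(t))^\top\mathrm{diag}(X(t))^{-1}Z(X(t))\,dt\big]^{-1}Y$ with $Y_k=\int_0^T\sum_{i=1}^d\frac{Z_{ik}(X(t))}{X_i(t)}d\widetilde X_i(t)$ and $\widetilde X(t)=X(t)-\int_0^tc(X(s))ds$; the term $c$ represents a known (possibly confounding) drift contribution and robustness means, as defined in the claim, that $c$ does not enter the $\varphi$-dependent part of the likelihood via the cross term. *)

(* Defs.v *)
From mathcomp Require Import all_boot all_order all_algebra.
Set Implicit Arguments. Unset Strict Implicit. Unset Printing Implicit Defensive.
Import Order.TTheory GRing.Theory Num.Theory.
Local Open Scope ring_scope.

(* Dimension convention: d = n.+1 coordinates, indices 'I_n.+1; the last index
   ord_max plays the role of coordinate d.  The "first d-1" indices are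
   widen_ord (leqnSn n) i for i : 'I_n. *)

Definition first (n : nat) (i : 'I_n) : 'I_n.+1 := widen_ord (leqnSn n) i.

Definition in_simplex (R : realFieldType) (n : nat) (x : 'I_n.+1 -> R) : Prop :=
  (forall i, 0 <= x i) /\ \sum_i x i = 1.

Definition in_interior (R : realFieldType) (n : nat) (x : 'I_n.+1 -> R) : Prop :=
  (forall i, 0 < x i) /\ \sum_i x i = 1.

Definition WF_V (R : realFieldType) (n : nat) (x : 'I_n.+1 -> R) : 'M[R]_n.+1 :=
  \matrix_(i, j) (x i * ((i == j)%:R - x j)).

Definition Vstar (R : realFieldType) (n : nat) (x : 'I_n.+1 -> R) : 'M[R]_n :=
  \matrix_(i, j) WF_V x (first i) (first j).

Definition Zstar (R : realFieldType) (n r : nat) (Zx : 'M[R]_(n.+1, r)) : 'M[R]_(n, r) :=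
  \matrix_(i, k) Zx (first i) k.

Definition cstar (R : realFieldType) (n : nat) (cx : 'cV[R]_n.+1) : 'cV[R]_n :=
  \col_i cx (first i) 0.

Definition cross_term (R : realFieldType) (n r : nat)
  (Z : ('I_n.+1 -> R) -> 'M[R]_(n.+1, r)) (c : ('I_n.+1 -> R) -> 'cV[R]_n.+1)
  (x : 'I_n.+1 -> R) (phi : 'cV[R]_r) : R :=
  ((phi^T *m (Zstar (Z x))^T *m invmx (Vstar x) *m cstar (c x)) 0 0).

Definition robust_to_c (R : realFieldType) (n r : nat)
  (Z : ('I_n.+1 -> R) -> 'M[R]_(n.+1, r)) (c : ('I_n.+1 -> R) -> 'cV[R]_n.+1) : Prop :=
  forall x, in_interior x ->
    forall phi phi' : 'cV[R]_r, cross_term Z c x phi = cross_term Z c x phi'.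

(* Main.v *)
Require Import Defs.
From mathcomp Require Import all_boot all_order all_algebra.
From mathcomp Require Import ring.
Import Order.TTheory GRing.Theory Num.Theory.
Local Open Scope ring_scope.

Lemma sum_deltaL (R : ringType) m (i : 'I_m) (F : 'I_m -> R) :
  \sum_j (i == j)%:R * F j = F i.
Proof.
rewrite (bigD1 i) //= eqxx mul1r big1 ?addr0 // => j /negPf.
by rewrite eq_sym => ->; rewrite mul0r.
Qed.

Lemma sum_deltaR (R : ringType) m (l : 'I_m) (F : 'I_m -> R) :
  \sum_j F j * (j == l)%:R = F l.
Proof.
rewrite (bigD1 l) //= eqxx mulr1 big1 ?addr0 // => j /negPf ->.
by rewrite mulr0.
Qed.

Lemma first_eq n (i j : 'I_n) : (first i == first j) = (i == j).
Proof. by apply: inj_eq => a b h; apply: val_inj; exact: (congr1 val h). Qed.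

Section S.
Variables (R : realFieldType) (n : nat) (x : 'I_n.+1 -> R).
Hypothesis hx : in_interior x.

Definition Minv : 'M[R]_n :=
  \matrix_(i, j) ((x ord_max)^-1 + (i == j)%:R * (x (first j))^-1).

Lemma sum_first : \sum_(j < n) x (first j) = 1 - x ord_max.
Proof. by case: hx => _; rewrite big_ord_recr /= => <-; rewrite addrK. Qed.

Lemma V_Minv : Vstar x *m Minv = 1%:M.
Proof.
case: hx => pos _.
apply/matrixP => i l; rewrite !mxE.
under eq_bigr => j _ do rewrite !mxE mulrDr.
rewrite big_split /= -mulr_suml.
rewrite [X in _ + X](eq_bigr (fun j => (x (first i) * (((first i) == (first j))%:R - x (first j)) * (x (first l))^-1) * (j == l)%:R)); last first.
  move=> j _; case: (eqVneq j l) => [->|].  { by rewrite /= ?mul1r ?mulr1. }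
  by move=> _; rewrite /= ?mul0r ?mulr0.
rewrite sum_deltaR.
have S1 : \sum_(j < n) x (first i) * ((first i == first j)%:R - x (first j))
   = x (first i) * x ord_max.
  rewrite -mulr_sumr sumrB.
  rewrite (eq_bigr (fun j => (i == j)%:R * 1)); last first.
    by move=> j _; rewrite mulr1 first_eq.
  by rewrite sum_deltaL sum_first opprB addrC subrK.
rewrite S1 first_eq.
have h1 := pos ord_max; have h2 := pos (first l).
case: (eqVneq i l) => [->|_] /=.
  by field; rewrite ?gt_eqF.
by field; rewrite ?gt_eqF.
Qed.
End S.

Lemma invV (R : realFieldType) n (x : 'I_n.+1 -> R) :
  in_interior x -> invmx (Vstar x) = @Minv _ _ x.
Proof.
move=> hx; have h := @V_Minv _ _ x hx.
have [u _] := mulmx1_unit h.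
by rewrite -[RHS](mulKmx u) h mulmx1.
Qed.

Lemma w_eq (R : realFieldType) (n r : nat)
  (Z : ('I_n.+1 -> R) -> 'M[R]_(n.+1, r)) (c : ('I_n.+1 -> R) -> 'cV[R]_n.+1) x :
  in_interior x ->
  \sum_i c x i 0 = 0 -> (forall k, \sum_i Z x i k = 0) ->
  forall k, ((Zstar (Z x))^T *m invmx (Vstar x) *m cstar (c x)) k 0
   = \sum_i (x i)^-1 * Z x i k * c x i 0.
Proof.
move=> hx hc hZ k; rewrite invV // !mxE.
set a := (x ord_max)^-1.
under eq_bigr => j _ do rewrite !mxE big_distrl /=.
under eq_bigr => j _ do under eq_bigr => i _ do rewrite !mxE.
transitivity (\sum_(j < n) \sum_(i < n) (Z x (first i) k * a * c x (first j) 0)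
   + \sum_(j < n) (x (first j))^-1 * Z x (first j) k * c x (first j) 0).
  rewrite -big_split /=; apply: eq_bigr => j _.
  rewrite -(@sum_deltaR _ _ j (fun i => (x (first j))^-1 * Z x (first i) k * c x (first j) 0)).
  rewrite -big_split /=; apply: eq_bigr => i _; rewrite /a; ring.
have hZ' := hZ k; rewrite big_ord_recr /= in hZ'.
rewrite big_ord_recr /= in hc.
rewrite [RHS]big_ord_recr /= addrC; congr (_ + _).
rewrite (eq_bigr (fun j => (\sum_(i < n) Z x (first i) k) * a * c x (first j) 0)); last first.
  by move=> j _; rewrite -!mulr_suml.
rewrite -mulr_sumr.
have -> : \sum_(i < n) Z x (first i) k = - Z x ord_max k.
  by rewrite -(addrK (Z x ord_max k) (\sum_(i < n) Z x (first i) k)) hZ' sub0r.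
have -> : \sum_(i < n) c x (first i) 0 = - c x ord_max 0.
  by rewrite -(addrK (c x ord_max 0) (\sum_(i < n) c x (first i) 0)) hc sub0r.
rewrite /a; ring.
Qed.

Theorem proposition2 (R : realFieldType) (n r : nat)
  (Z : ('I_n.+1 -> R) -> 'M[R]_(n.+1, r)) (c : ('I_n.+1 -> R) -> 'cV[R]_n.+1) :
  (0 < n)%N ->
  (forall x, in_simplex x -> \sum_i c x i 0 = 0) ->
  (forall x, in_simplex x -> forall k, \sum_i Z x i k = 0) ->
  robust_to_c Z c <->
  (forall x, in_interior x -> forall k : 'I_r,
     \sum_i (x i)^-1 * Z x i k * c x i 0 = 0).
Proof.
move=> _ hc hZ.
have ct : forall x, in_interior x -> forall phi : 'cV[R]_r,
    cross_term Z c x phi = \sum_k phi k 0 * \sum_i (x i)^-1 * Z x i k * c x i 0.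
  move=> x hx phi.
  have hs : in_simplex x by case: hx => p s; split => // i; exact: ltW.
  rewrite /cross_term -!mulmxA mxE; apply: eq_bigr => k _.
  by rewrite mulmxA w_eq ?mxE //; [exact: hc | exact: hZ].
split.
- move=> rob x hx k.
  have := rob x hx (delta_mx k 0) 0.
  rewrite !ct //.
  set W := fun j => \sum_(i < n.+1) (x i)^-1 * Z x i j * c x i 0.
  rewrite (eq_bigr (fun j => (k == j)%:R * W j)); last first.
    by move=> j _; rewrite mxE eqxx andbT eq_sym.
  rewrite sum_deltaL big1 // => j _; by rewrite mxE mul0r.
- move=> h x hx phi phi'.
  rewrite !ct //; rewrite !big1 // => k _; by rewrite h // mulr0.
Qed.
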